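(* Let $(G,k,M^*,M)$ be a critical tuple and let $\mathcal{C}$ be a set of directed cycles of $G_M$, each with $w_M(C)\le0$, such that every $e\in E^+(C^+)$ is contained in some cycle of $\mathcal{C}$ and, for every $C\in\mathcal{C}$, $C\cap C^+$ is a single path. Then there exists a subset $\mathcal{C}'\subseteq\mathcal{C}$ such that every $e\in E^+(C^+)$ is contained in some cycle of $\mathcal{C}'$, for every $C\in\mathcal{C}'$ the set $C\cap C^+$ is a single path, and every $e\in E^-(C^+)$ is contained in at most two cycles of $\mathcal{C}'$.
   Context: $R(H)$ is the set of red edges of an edge set $H$. For a perfect matching $M$ of a red/blue edge-colored bipartite graph $G=(A\sqcup B,E)$, $G_M$ is the directed graph on $A\sqcup B$ with edges of $M$ oriented from $A$ to $B$ and other edges from $B$ to $A$, weighted by $w_M(e)=0$ for blue $e$, $-1$ for red $e\in M$, $+1$ for red $e\notin M$; $E^+(H)$ (resp. $E^-(H)$) is the set of red edges of $H$ not in $M$ (resp. in $M$), $w_M(H)=|E^+(H)|-|E^-(H)|$. Cycles are identified with edge sets. For an edge $e$, $M^e$ is a perfect matching containing $e$ with the minimum number of red edges among those containing $e$. A tuple $(G,k,M^*,M)$ is critical if: every edge of $G$ lies in some perfect matching; $|R(M^* )|=k$; $|R(M)|<\frac13k$; every directed cycle $C$ of $G_M$ with $w_M(C)>0$ has $|E^+(C)|>\frac23k$; and $|R(M^e)|<\frac13k$ for every red $e\in M^*\setminus M$. $C^+$ is the unique positive-weight directed cycle of $G_M$ contained in $M\Delta M^*$. *)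

(* Defs.v *)
From mathcomp Require Import all_boot all_order all_algebra.
Set Implicit Arguments. Unset Strict Implicit. Unset Printing Implicit Defensive.
Import Order.TTheory GRing.Theory Num.Theory.

(* A red/blue edge-coloured bipartite graph G = (A ⊔ B, E): a finite type E of
   edges, each edge e joining ea e ∈ A and eb e ∈ B; the red edges form the set
   red (all other edges are blue).  Simplicity is imposed separately in the theorem. *)
Section Defs.
Variables (A B E : finType) (ea : E -> A) (eb : E -> B).

Definition perfect_matching (N : {set E}) : bool :=
  [forall a, #|[set e in N | ea e == a]| == 1%N] &&
  [forall b, #|[set e in N | eb e == b]| == 1%N].

Definition dtail (M : {set E}) (e : E) : A + B :=
  if e \in M then inl (ea e) else inr (eb e).
Definition dhead (M : {set E}) (e : E) : A + B :=
  if e \in M then inr (eb e) else inl (ea e).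

Definition dcycle (M C : {set E}) : Prop :=
  exists s : seq E,
    [/\ s != [::], uniq (map (dhead M) s),
        cycle (fun e f => dhead M e == dtail M f) s & C = [set e in s]].

Definition dpath (M P : {set E}) : Prop :=
  exists (e : E) (s : seq E),
    [/\ path (fun x y => dhead M x == dtail M y) e s,
        uniq (dtail M e :: map (dhead M) (e :: s)) & P = [set x in e :: s]].

Variable red : {set E}.

Definition Eplus (M H : {set E}) : {set E} := [set e in H | (e \in red) && (e \notin M)].
Definition Eminus (M H : {set E}) : {set E} := [set e in H | (e \in red) && (e \in M)].
Definition weight (M H : {set E}) : int := (#|Eplus M H|%:Z - #|Eminus M H|%:Z)%R.

Definition is_Me (e : E) (N : {set E}) : Prop :=
  [/\ perfect_matching N, e \in N &
      forall N', perfect_matching N' -> e \in N' -> #|N :&: red| <= #|N' :&: red|].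

Definition critical (k : nat) (Ms M : {set E}) : Prop :=
  [/\ forall e : E, exists N, perfect_matching N /\ e \in N,
      perfect_matching Ms /\ #|Ms :&: red| = k,
      perfect_matching M /\ 3 * #|M :&: red| < k,
      (forall C, dcycle M C -> (0 < weight M C)%R -> 2 * k < 3 * #|Eplus M C|) &
      (forall e, e \in red -> e \in Ms :\: M ->
         exists N, is_Me e N /\ 3 * #|N :&: red| < k)].

Definition is_Cplus (Ms M Cp : {set E}) : Prop :=
  let D := (M :\: Ms) :|: (Ms :\: M) in
  [/\ dcycle M Cp, (0 < weight M Cp)%R, Cp \subset D &
      forall C, dcycle M C -> (0 < weight M C)%R -> C \subset D -> C = Cp].

End Defs.

(* Main.v *)
Require Import Defs.
From mathcomp Require Import all_boot all_order all_algebra.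
From Stdlib Require Import Classical.
Import Order.TTheory GRing.Theory Num.Theory.
Set Implicit Arguments. Unset Strict Implicit. Unset Printing Implicit Defensive.

Lemma uniq_map_in (T1 T2 : eqType) (f : T1 -> T2) (s : seq T1) x y :
  uniq (map f s) -> x \in s -> y \in s -> f x = f y -> x = y.
Proof.
elim: s => [|z s IH] //= /andP[nz us].
rewrite !inE => /predU1P[->|xs] /predU1P[->|ys] // E.
- by move: nz; rewrite E (map_f f ys).
- by move: nz; rewrite -E (map_f f xs).
- exact: IH.
Qed.

Section Arcs.
Variables (T : finType) (S : {set T}) (r : rel T).
Hypothesis uniqS : forall x y y', y \in S -> y' \in S -> r x y -> r x y' -> y = y'.
Hypothesis uniqP : forall x x' y, x \in S -> x' \in S -> r x y -> r x' y -> x = x'.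

Definition nxt x := odflt x [pick y in S | r x y].
Definition prv y := odflt y [pick x in S | r x y].

Lemma nxtE x y : y \in S -> r x y -> nxt x = y.
Proof.
rewrite /nxt; case: pickP => [z /andP[zS rz]|H] yS rxy /=; first exact: (uniqS zS yS rz rxy).
by move: (H y); rewrite /= yS rxy.
Qed.

Lemma prvE x y : x \in S -> r x y -> prv y = x.
Proof.
rewrite /prv; case: pickP => [z /andP[zS rz]|H] xS rxy /=; first exact: (uniqP zS xS rz rxy).
by move: (H x); rewrite /= xS rxy.
Qed.

Lemma fwd x p : path r x p -> all (mem S) p ->
  forall i, i <= size p -> iter i nxt x = nth x (x::p) i.
Proof.
elim: p x => [|y p IH] x /=; first by move=> _ _ [].
move=> /andP[rxy pth] /andP[yS aS] [|i] // Hi.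
by rewrite iterSr (nxtE yS rxy) IH //=; apply: set_nth_default.
Qed.

Lemma bwd x p : path r x p -> x \in S -> all (mem S) p ->
  forall i, i <= size p -> iter i prv (last x p) = nth x (x::p) (size p - i).
Proof.
elim/last_ind: p => [|p y IH] /=; first by move=> _ _ _ [].
rewrite rcons_path => /andP[pth rl] xS; rewrite all_rcons => /andP[yS aS] [|i] Hi.
  by rewrite last_rcons size_rcons subn0 /= nth_rcons ltnn eqxx.
have lS : last x p \in S.
  have := mem_last x p; rewrite inE => /predU1P[->//|lp].
  exact: (allP aS).
rewrite iterSr last_rcons (prvE lS rl) IH //; last by rewrite size_rcons in Hi.
rewrite size_rcons subSS -rcons_cons nth_rcons /=.
by rewrite ltnS leq_subr.
Qed.

Lemma arc_core x0 pb p2 x : path r x0 pb -> path r (last x0 pb) p2 ->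
  all (mem S) (x0 :: pb ++ p2) -> x \in x0 :: pb ++ p2 ->
  (exists i, (forall j, j <= i -> iter j nxt (last x0 pb) \in x0 :: pb ++ p2)
             /\ x = iter i nxt (last x0 pb)) \/
  (exists i, (forall j, j <= i -> iter j prv (last x0 pb) \in x0 :: pb ++ p2)
             /\ x = iter i prv (last x0 pb)).
Proof.
move=> pb_p p2_p aS xin; move: aS; rewrite -cat_cons all_cat => /andP[/andP[x0S aS1] aS2].
move: xin.
rewrite -cat_cons mem_cat => /orP[xin|xin].
- right; exists (size pb - index x (x0 :: pb)).
  have hi : index x (x0 :: pb) <= size pb by rewrite -ltnS; rewrite index_mem.
  split.
  + move=> j hj; rewrite (bwd pb_p x0S aS1); last exact: leq_trans hj (leq_subr _ _).
    by rewrite mem_cat mem_nth // ltnS leq_subr.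
  + by rewrite (bwd pb_p x0S aS1) ?leq_subr // subKn // nth_index.
- left; exists (index x p2).+1.
  have hi : index x p2 < size p2 by rewrite index_mem.
  split.
  + move=> j hj; rewrite (fwd p2_p aS2); last exact: leq_trans hj hi.
    have : nth (last x0 pb) (last x0 pb :: p2) j \in last x0 pb :: p2.
      by rewrite mem_nth //= ltnS (leq_trans hj hi).
    rewrite inE => /predU1P[->|]; last by rewrite mem_cat => ->; rewrite orbT.
    by rewrite mem_cat mem_last.
  + by rewrite (fwd p2_p aS2) //= nth_index.
Qed.

Definition goodF (P : {set T}) e i := forall j, j <= i -> iter j nxt e \in P.
Definition goodB (P : {set T}) e i := forall j, j <= i -> iter j prv e \in P.

Lemma arc_split e0 s e x : path r e0 s -> all (mem S) (e0::s) -> e \in e0::s ->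
  x \in e0 :: s ->
  (exists i, goodF [set y in e0::s] e i /\ x = iter i nxt e) \/
  (exists i, goodB [set y in e0::s] e i /\ x = iter i prv e).
Proof.
move=> pth aS; rewrite inE => /predU1P[->|es] xin.
  have := @arc_core e0 [::] s x isT pth aS xin.
  by case=> [[i [H ->]]|[i [H ->]]]; [left|right]; exists i; split=> // j hj;
     rewrite inE; apply: H.
case/splitPr: es pth aS xin => p1 p2.
rewrite cat_path /= => /andP[pp1 /andP[rl pp2]] aS xin.
have pb : path r e0 (rcons p1 e) by rewrite rcons_path pp1.
have eq : e0 :: p1 ++ e :: p2 = e0 :: rcons p1 e ++ p2 by rewrite cat_rcons.
have := @arc_core e0 (rcons p1 e) p2 x pb; rewrite last_rcons -eq.
move=> /(_ pp2 aS xin).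
by case=> [[i [H ->]]|[i [H ->]]]; [left|right]; exists i; split=> // j hj;
   rewrite inE; apply: H.
Qed.

Definition ArcP (P : {set T}) e := forall x, x \in P ->
  (exists i, goodF P e i /\ x = iter i nxt e) \/ (exists i, goodB P e i /\ x = iter i prv e).

Definition RF e (P Q : {set T}) := forall i, goodF P e i -> goodF Q e i.
Definition RB e (P Q : {set T}) := forall i, goodB P e i -> goodB Q e i.

Lemma RF_tot e P Q : RF e P Q \/ RF e Q P.
Proof.
case: (classic (RF e P Q)) => [|H]; [by left|right].
case: (not_all_ex_not _ _ H) => i Hi.
have [gP ngQ] : goodF P e i /\ ~ goodF Q e i by tauto.
move=> j gQ; case: (leqP i j) => hij.
  by exfalso; apply: ngQ => k hk; apply: gQ; exact: leq_trans hk hij.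
by move=> k hk; apply: gP; apply: leq_trans hk (ltnW hij).
Qed.

Lemma RB_tot e P Q : RB e P Q \/ RB e Q P.
Proof.
case: (classic (RB e P Q)) => [|H]; [by left|right].
case: (not_all_ex_not _ _ H) => i Hi.
have [gP ngQ] : goodB P e i /\ ~ goodB Q e i by tauto.
move=> j gQ; case: (leqP i j) => hij.
  by exfalso; apply: ngQ => k hk; apply: gQ; exact: leq_trans hk hij.
by move=> k hk; apply: gP; apply: leq_trans hk (ltnW hij).
Qed.

Lemma key e Pc Pa Pb : ArcP Pc e -> RF e Pc Pa -> RB e Pc Pb ->
  Pc \subset Pa :|: Pb.
Proof.
move=> H hF hB; apply/subsetP => x /H [[i [g ->]]|[i [g ->]]]; rewrite inE.
  by rewrite (hF i g i (leqnn i)).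
by rewrite (hB i g i (leqnn i)) orbT.
Qed.

End Arcs.

Lemma three_pick (U : Type) (mem : U -> Prop) (R1 R2 : U -> U -> Prop)
  (t1 : forall x y, R1 x y \/ R1 y x) (t2 : forall x y, R2 x y \/ R2 y x)
  x1 x2 x3 : mem x1 -> mem x2 -> mem x3 -> x1 <> x2 -> x2 <> x3 -> x3 <> x1 ->
  exists c a b, [/\ mem c, mem a, mem b, a <> c & [/\ b <> c, R1 c a & R2 c b]].
Proof.
move=> m1 m2 m3 d12 d23 d31.
pose h (R : U -> U -> Prop) c := exists a, [/\ mem a, a <> c & R c a].
have pr : forall R, (forall x y, R x y \/ R y x) -> forall u v, mem u -> mem v -> u <> v -> h R u \/ h R v.
  move=> R t u v mu mv d; case: (t u v) => ?; [left; exists v|right; exists u]; split=> //.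
  by move=> E; apply: d.
case: (classic (h R1 x1)) => H1; case: (classic (h R2 x1)) => H2.
- case: H1 => a [ma da ra]; case: H2 => b [mb db rb].
  by exists x1, a, b; split.
- have : h R2 x2 \/ h R2 x3 by case: (pr _ t2 x1 x2) => //; case: (pr _ t2 x1 x3) => //; auto.
  have : h R1 x2 \/ h R1 x3 by case: (pr _ t1 x2 x3) => //; auto.
  have g2 := pr _ t2 x1 x2 m1 m2 d12; have g3 := pr _ t2 x1 x3 m1 m3 (fun E => d31 (esym E)).
  have [hB2 hB3] : h R2 x2 /\ h R2 x3 by tauto.
  case=> [[a [ma da ra]]|[a [ma da ra]]] _.
  + by case: hB2 => b [mb db rb]; exists x2, a, b; split.
  + by case: hB3 => b [mb db rb]; exists x3, a, b; split.
- have g2 := pr _ t1 x1 x2 m1 m2 d12; have g3 := pr _ t1 x1 x3 m1 m3 (fun E => d31 (esym E)).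
  have [hF2 hF3] : h R1 x2 /\ h R1 x3 by tauto.
  case: (pr _ t2 x2 x3 m2 m3 d23) => [[b [mb db rb]]|[b [mb db rb]]].
  + by case: hF2 => a [ma da ra]; exists x2, a, b; split.
  + by case: hF3 => a [ma da ra]; exists x3, a, b; split.
- have g2 := pr _ t1 x1 x2 m1 m2 d12; have g3 := pr _ t1 x1 x3 m1 m3 (fun E => d31 (esym E)).
  have [hF2 hF3] : h R1 x2 /\ h R1 x3 by tauto.
  have g2' := pr _ t2 x1 x2 m1 m2 d12; have g3' := pr _ t2 x1 x3 m1 m3 (fun E => d31 (esym E)).
  have [hB2 hB3] : h R2 x2 /\ h R2 x3 by tauto.
  by case: hF2 => a [ma da ra]; case: hB2 => b [mb db rb]; exists x2, a, b; split.
Qed.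

Lemma path_tails (T U : eqType) (h tl : T -> U) x p :
  path (fun a b => h a == tl b) x p -> map tl p = map h (belast x p).
Proof. by elim: p x => //= y p IH x /andP[/eqP-> /IH ->]. Qed.

Theorem lemma8 (A B E : finType) (ea : E -> A) (eb : E -> B)
  (red : {set E}) (k : nat) (Ms M Cp : {set E}) (Cs : {set {set E}}) :
  injective (fun e => (ea e, eb e)) ->
  critical ea eb red k Ms M ->
  is_Cplus ea eb red Ms M Cp ->
  (forall C, C \in Cs -> dcycle ea eb M C /\ (weight red M C <= 0)%R) ->
  (forall e, e \in Eplus red M Cp -> exists2 C, C \in Cs & e \in C) ->
  (forall C, C \in Cs -> dpath ea eb M (C :&: Cp)) ->
  exists Cs' : {set {set E}},
    [/\ Cs' \subset Cs,
        (forall e, e \in Eplus red M Cp -> exists2 C, C \in Cs' & e \in C),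
        (forall C, C \in Cs' -> dpath ea eb M (C :&: Cp)) &
        (forall e, e \in Eminus red M Cp -> #|[set C in Cs' | e \in C]| <= 2)].
Proof.
move=> _ _ [cycCp _ _ _] _ cover paths.
pose r : rel E := fun x y => dhead ea eb M x == dtail ea eb M y.
case: cycCp => sc [scne uh cyc defCp].
have uP : forall x x' y, x \in Cp -> x' \in Cp -> r x y -> r x' y -> x = x'.
  move=> x x' y; rewrite defCp !inE => xs x's /eqP h1 /eqP h2.
  by apply: (uniq_map_in uh xs x's); rewrite h1 h2.
have uS : forall x y y', y \in Cp -> y' \in Cp -> r x y -> r x y' -> y = y'.
  move: scne uh cyc defCp; case: sc => // z t _ uh cyc defCp.
  have tails : map (dtail ea eb M) (rcons t z) = map (dhead ea eb M) (z :: t).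
    by rewrite -(belast_rcons z t z); apply: path_tails.
  have ut : uniq (map (dtail ea eb M) (rcons t z)) by rewrite tails.
  have memr : forall w, (w \in rcons t z) = (w \in z :: t) := mem_rcons t z.
  move=> x y y'; rewrite defCp !in_set -!memr => ys y's /eqP h1 /eqP h2.
  by apply: (uniq_map_in ut ys y's); rewrite -h1 -h2.
pose Pr : pred {set {set E}} := fun X => (X \subset Cs) &&
  [forall e, (e \in Eplus red M Cp) ==> [exists C, (C \in X) && (e \in C)]].
have PCs : Pr Cs.
  apply/andP; split => //; apply/forallP => e; apply/implyP => /cover [C CCs eC].
  by apply/existsP; exists C; rewrite CCs eC.
have [A0 minA sA] := minset_exists PCs.
case/minsetP: minA => PA minA'.
have coverA : forall e, e \in Eplus red M Cp -> exists2 C, C \in A0 & e \in C.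
  move=> e eE; case/andP: PA => _ /forallP/(_ e); rewrite eE /= => /existsP [C /andP[]].
  by exists C.
exists A0; split => //.
  by move=> C CA; apply: paths; exact: (subsetP sA).
move=> e eM; rewrite leqNgt; apply/negP => /card_gt2P [x [y [z [[xi yi zi] [xy yz zx]]]]].
have eCp : e \in Cp by move: eM; rewrite inE => /andP[].
have arc : forall C, C \in A0 -> e \in C -> ArcP Cp r (C :&: Cp) e.
  move=> C CA eC; case: (paths C (subsetP sA C CA)) => e0 [s0 [pth _ defP]].
  have aS : all (mem Cp) (e0 :: s0).
    apply/allP => w win; have : w \in C :&: Cp by rewrite defP inE.
    by rewrite inE => /andP[].
  have ein : e \in e0 :: s0.
    have : e \in C :&: Cp by rewrite inE eC eCp.
    by rewrite defP inE.
  rewrite defP => w win.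
  have win' : w \in e0 :: s0 by move: win; rewrite inE.
  exact: (arc_split uS uP pth aS ein win').
move: xi yi zi; rewrite !inE => /andP[xA ex] /andP[yA ey] /andP[zA ez].
have := @three_pick {set E} (fun C => C \in A0 /\ e \in C)
  (fun C D => RF Cp r e (C :&: Cp) (D :&: Cp))
  (fun C D => RB Cp r e (C :&: Cp) (D :&: Cp))
  (fun C D => RF_tot Cp r e _ _) (fun C D => RB_tot Cp r e _ _) x y z
  (conj xA ex) (conj yA ey) (conj zA ez) (elimN eqP xy) (elimN eqP yz) (elimN eqP zx).
case=> c [a [b [[cA ec] [aA _] [bA _] ac [bc R1 R2]]]].
have sub := key (arc c cA ec) R1 R2.
have PA' : Pr (A0 :\ c).
  apply/andP; split; first exact: subset_trans (subD1set A0 c) sA.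
  apply/forallP => f; apply/implyP => fE.
  have fCp : f \in Cp by move: fE; rewrite inE => /andP[].
  case: (coverA f fE) => C CA fC; apply/existsP.
  case: (eqVneq C c) => [Cc|Cnc].
    subst C; have : f \in c :&: Cp by rewrite inE fC fCp.
    move/(subsetP sub); rewrite !inE => /orP[/andP[fa _]|/andP[fb _]].
      by exists a; rewrite !inE aA fa !andbT; apply/eqP.
    by exists b; rewrite !inE bA fb !andbT; apply/eqP.
  by exists C; rewrite !inE Cnc CA fC.
have E' := minA' _ PA' (subD1set A0 c).
by move: cA; rewrite -E' !inE eqxx.
Qed.
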